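(* Let $\mathbf X=(X_1,\dots,X_d)$ be a random vector taking values in $\mathbb N^d$, let $\mathsf A=(a_{ij}) \in [0,1]^{c\times d}$ be a matrix whose columns $\mathbf a_j=(a_{1j},\dots,a_{cj})$ satisfy $|\mathbf a_j|=\sum_{i=1}^c a_{ij} \leq 1$, and let $\mathbf Y = \mathsf A \circ \mathbf X$ be the multinomial re-marking of $\mathbf X$ with parameters $\mathsf A$. Then: 1. $\mathbb E \mathbf Y = \mathsf A\, \mathbb E \mathbf X$; 2. $\mathsf{Disp}(\mathbf Y) = \mathsf A \,\mathsf{Disp}(\mathbf X)\, \mathsf A^\top$; 3. $\Phi_{\mathbf Y}(\mathbf t) = \Phi_{\mathbf X}(\mathsf A^\top \mathbf t)$.
   Context: Multinomial re-marking: given $\mathbf X$, let $\mathbf Z^{(1)},\dots,\mathbf Z^{(d)}$ be conditionally independent given $\mathbf X$ with $\mathbf Z^{(j)}\sim\operatorname{Multi}(X_j,\mathbf a_j)$ (each of the $X_j$ items is independently given new colour $i\in\{1,\dots,c\}$ with probability $a_{ij}$ or discarded with probability $1-|\mathbf a_j|$, and $Z^{(j)}_i$ counts those given colour $i$); then $\mathbf Y=\mathsf A\circ\mathbf X:=\sum_{j=1}^d\mathbf Z^{(j)}$. Dispersion–covariance matrix $\mathsf{Disp}(\mathbf X)$: diagonal entries $\operatorname{Disp}(X_i)=\operatorname{Var}(X_i)-\mathbb E X_i$, off-diagonal entries $\operatorname{Cov}(X_i,X_j)$. Multivariate factorial moment generating function: $\Phi_{\mathbf X}(\mathbf s)=\mathbb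 E\prod_{j}(1+s_j)^{X_j}$. The moments appearing are assumed to exist. *)

(* Defs.v *)
From mathcomp Require Import all_boot all_order all_algebra.
From mathcomp Require Import all_classical all_reals all_analysis.
Set Implicit Arguments. Unset Strict Implicit. Unset Printing Implicit Defensive.
Import Order.TTheory GRing.Theory Num.Theory.
Local Open Scope ring_scope.

Definition vecN (n : nat) := {ffun 'I_n -> nat}.

(* Real-valued sum of a (possibly signed) family over a countable/choice type:
   sum of positive parts minus sum of negative parts (meaningful when the
   family is absolutely summable, see [dsummable]). *)
Definition dsum (R : realType) (T : choiceType) (f : T -> R) : R :=
  fine (\esum_(x in [set: T]) (Num.max (f x) 0)%:E)
  - fine (\esum_(x in [set: T]) (Num.max (- f x) 0)%:E).

Definition dsummable (R : realType) (T : choiceType) (f : T -> R) : Prop :=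
  summable [set: T] (fun x => (f x)%:E).

Definition is_pmf (R : realType) (T : choiceType) (p : T -> R) : Prop :=
  (forall x, 0 <= p x) /\ (\esum_(x in [set: T]) (p x)%:E = 1%E).

Definition Ex (R : realType) (T : choiceType) (q : T -> R) (f : T -> R) : R :=
  dsum (fun w => q w * f w).
Definition Ex_exists (R : realType) (T : choiceType) (q : T -> R) (f : T -> R) : Prop :=
  dsummable (fun w => q w * f w).

Definition cov (R : realType) (T : choiceType) (q : T -> R) (U V : T -> R) : R :=
  Ex q (fun w => U w * V w) - Ex q U * Ex q V.

Definition meanvec (R : realType) (T : choiceType) (q : T -> R) (n : nat)
  (U : T -> vecN n) : 'cV[R]_n :=
  \col_i Ex q (fun w => (U w i)%:R).

Definition dispmx (R : realType) (T : choiceType) (q : T -> R) (n : nat)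
  (U : T -> vecN n) : 'M[R]_n :=
  \matrix_(i, k)
    if i == k then cov q (fun w => (U w i)%:R) (fun w => (U w i)%:R)
                   - Ex q (fun w => (U w i)%:R)
    else cov q (fun w => (U w i)%:R) (fun w => (U w k)%:R).

Definition fmgf_integrand (R : realType) (T : choiceType) (n : nat)
  (U : T -> vecN n) (s : 'cV[R]_n) (w : T) : R :=
  \prod_i (1 + s i 0) ^+ (U w i).

Definition fmgf (R : realType) (T : choiceType) (q : T -> R) (n : nat)
  (U : T -> vecN n) (s : 'cV[R]_n) : R :=
  Ex q (fmgf_integrand U s).

(* Multinomial pmf with discard: n items, each independently gets colour i with
   probability a i, or is discarded with probability 1 - sum_i a i;
   z i counts items of colour i. *)
Definition multi_pmf (R : realType) (c : nat) (n : nat) (a : 'I_c -> R)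
  (z : vecN c) : R :=
  let s := (\sum_i z i)%N in
  if (s <= n)%N then
    (n`!)%:R / ((\prod_i ((z i)`!)%:R) * ((n - s)`!)%:R)
    * (\prod_i a i ^+ z i) * (1 - \sum_i a i) ^+ (n - s)
  else 0.

(* Underlying sample space of the re-marking: outcomes (x, (z^(1),...,z^(d)))
   with x in N^d (value of X) and z^(j) in N^c (value of Z^(j)). *)
Definition Omega (c d : nat) := (vecN d * {ffun 'I_d -> vecN c})%type.

(* Joint pmf of (X, Z^(1),...,Z^(d)): X has pmf p, and given X = x the Z^(j)
   are independent with Z^(j) ~ Multi(x_j, a_j). *)
Definition remark_pmf (R : realType) (c d : nat) (p : vecN d -> R)
  (A : 'M[R]_(c, d)) (w : Omega c d) : R :=
  p w.1 * \prod_j multi_pmf (w.1 j) (fun i => A i j) (w.2 j).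

Definition Xof (c d : nat) (w : Omega c d) : vecN d := w.1.

(* Y = A o X = sum_j Z^(j). *)
Definition Yof (c d : nat) (w : Omega c d) : vecN c :=
  [ffun i => (\sum_j w.2 j i)%N].

(* Main.v *)
Require Import Defs.
From mathcomp Require Import all_boot all_order all_algebra.
From mathcomp Require Import all_classical all_reals all_analysis.
From mathcomp Require Import ring lra zify.
Set Implicit Arguments. Unset Strict Implicit.
Import Order.TTheory GRing.Theory Num.Theory.
Local Open Scope ring_scope.

Section ES.
Variables (R : realType) (T : choiceType).
Local Open Scope ereal_scope.

Definition ES (f : T -> R) : \bar R := \esum_(x in [set: T]) (f x)%:E.

Lemma ES_ge0 f : (forall x, (0 <= f x)%R) -> 0 <= ES f.
Proof. by move=> f0; apply: esum_ge0 => x _; rewrite lee_fin. Qed.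

Lemma ESD f g : (forall x, (0 <= f x)%R) -> (forall x, (0 <= g x)%R) ->
  ES (fun x => f x + g x)%R = ES f + ES g.
Proof.
move=> f0 g0; rewrite /ES -esumD; last 2 first.
- by move=> x _; rewrite lee_fin.
- by move=> x _; rewrite lee_fin.
by apply: eq_esum => x _; rewrite EFinD.
Qed.

Lemma ESZ r f : (0 <= r)%R -> (forall x, (0 <= f x)%R) ->
  ES (fun x => r * f x)%R = r%:E * ES f.
Proof.
move=> r0 f0; rewrite /ES /esum -ereal_supZl //; last first.
  by apply/set0P; exists 0; exists set0; [exact: fsets_set0|rewrite fsbig_set0].
congr ereal_sup; apply/seteqP; split => y /=.
  move=> [A FA <-]; exists (\sum_(x \in A) (f x)%:E); first by exists A.
  by rewrite ge0_mule_fsumr //; apply: eq_fsbigr => x _; rewrite EFinM.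
move=> [_ [A FA <-] <-]; exists A => //.
by rewrite ge0_mule_fsumr //; apply: eq_fsbigr => x _; rewrite EFinM.
Qed.

Lemma ES_sum (I : finType) (F : I -> T -> R) :
  (forall m x, (0 <= F m x)%R) ->
  ES (fun x => \sum_m F m x)%R = \sum_m ES (F m).
Proof.
move=> F0; rewrite /ES -esum_sum; last by move=> x m _ _; rewrite lee_fin.
by apply: eq_esum => x _; rewrite sumEFin.
Qed.

Lemma ES_eq f g : (forall x, f x = g x) -> ES f = ES g.
Proof. by move=> e; apply: eq_esum => x _; rewrite e. Qed.

Lemma ES_le f g : (forall x, (f x <= g x)%R) -> ES f <= ES g.
Proof. by move=> e; apply: le_esum => x _; rewrite lee_fin. Qed.

Lemma ES_fin f : (forall x, (0 <= f x)%R) -> ES f < +oo -> ES f = (fine (ES f))%:E.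
Proof. by move=> f0 lt; rewrite fineK // ge0_fin_numE // ES_ge0. Qed.

End ES.

Section Multi.
Variables (R : realType) (c : nat) (a : 'I_c -> R).

Definition incr (i : 'I_c) (z : vecN c) : vecN c := [ffun k => (z k + (k == i))%N].
Definition decr (i : 'I_c) (z : vecN c) : vecN c := [ffun k => (z k - (k == i))%N].
Definition Dz (z : vecN c) : R := \prod_i ((z i)`!)%:R.
Definition Pz (z : vecN c) : R := \prod_i a i ^+ z i.
Definition szn (z : vecN c) : nat := (\sum_i z i)%N.
Definition bb : R := 1 - \sum_i a i.

Lemma multiE n (z : vecN c) : multi_pmf n a z =
  if (szn z <= n)%N then (n`!)%:R / (Dz z * ((n - szn z)`!)%:R) * Pz z * bb ^+ (n - szn z)
  else 0.
Proof. by []. Qed.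

Lemma Dz_neq0 (z : vecN c) : Dz z != 0.
Proof. by rewrite /Dz; apply/prodf_neq0 => i _; rewrite pnatr_eq0 -lt0n fact_gt0. Qed.

Lemma fact_neq0 m : ((m`!)%:R : R) != 0.
Proof. by rewrite pnatr_eq0 -lt0n fact_gt0. Qed.

Lemma szn_decr i (z : vecN c) : (0 < z i)%N -> (szn (decr i z)).+1 = szn z.
Proof.
move=> zi; rewrite /szn (bigD1 i) //= [in RHS](bigD1 i) //= ffunE eqxx.
rewrite (eq_bigr (fun k => z k)); last by move=> k /negbTE kn; rewrite ffunE kn subn0.
rewrite -addSn; congr (_ + _)%N. 
by rewrite subn1 prednK.
Qed.

Lemma Dz_decr i (z : vecN c) : (0 < z i)%N -> Dz (decr i z) * (z i)%:R = Dz z.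
Proof.
move=> zi; rewrite /Dz (bigD1 i) //= [in RHS](bigD1 i) //= ffunE eqxx.
rewrite (eq_bigr (fun k => ((z k)`!)%:R)); last by move=> k /negbTE kn; rewrite ffunE kn subn0.
case: (z i) zi => // m _; rewrite factS natrM subn1 /=; ring.
Qed.

Lemma Pz_decr i (z : vecN c) : (0 < z i)%N -> a i * Pz (decr i z) = Pz z.
Proof.
move=> zi; rewrite /Pz (bigD1 i) //= [in RHS](bigD1 i) //= ffunE eqxx.
rewrite (eq_bigr (fun k => a k ^+ z k)); last by move=> k /negbTE kn; rewrite ffunE kn subn0.
case: (z i) zi => // m _; rewrite exprS subn1 /=; ring.
Qed.

Definition Cz n (z : vecN c) : R := if (szn z <= n.+1)%N then
  (n`!)%:R / (Dz z * ((n.+1 - szn z)`!)%:R) * Pz z * bb ^+ (n.+1 - szn z) else 0.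

Lemma term_i n i (z : vecN c) : a i * (if (0 < z i)%N then multi_pmf n a (decr i z) else 0)
  = (z i)%:R * Cz n z.
Proof.
case: (posnP (z i)) => [zi0|zi]; first by rewrite zi0 /= mulr0 mul0r.
rewrite multiE /Cz -(szn_decr zi) ltnS subSS.
case: ifP => _; last by rewrite !mulr0.
rewrite -(Dz_decr zi) -(Pz_decr zi).
have h1 := Dz_neq0 (decr i z).
have h2 := fact_neq0 (n - szn (decr i z)).
have h3 : ((z i)%:R : R) != 0 by rewrite pnatr_eq0 -lt0n.
field; rewrite h1 h2 h3 //.
Qed.

Lemma term_b n (z : vecN c) : bb * multi_pmf n a z = (n.+1 - szn z)%:R * Cz n z.
Proof.
rewrite multiE /Cz.
case: (ltngtP (szn z) n.+1) => h.
- have h' : (szn z <= n)%N by [].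
  rewrite h' subSn // factS natrM exprS.
  have h1 := Dz_neq0 z. have h2 := fact_neq0 (n - szn z).
  have h3 : 1 + (n - szn z)%:R != 0 :> R by rewrite addrC natr1 pnatr_eq0.
  field; by rewrite h1 h2 h3.
- have -> : (szn z <= n)%N = false by lia.
  by rewrite !mulr0.
- by rewrite h ltnn subnn mul0r mulr0.
Qed.

Lemma multi_rec n (z : vecN c) : multi_pmf n.+1 a z =
  \sum_i a i * (if (0 < z i)%N then multi_pmf n a (decr i z) else 0)
  + bb * multi_pmf n a z.
Proof.
under eq_bigr do rewrite term_i.
rewrite term_b -mulr_suml -mulrDl -natr_sum.
rewrite multiE /Cz -/(szn z).
case: ifP => h; last by rewrite mulr0.
rewrite -natrD subnKC // factS natrM; ring.
Qed.

Hypothesis a0 : forall i, 0 <= a i.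
Hypothesis a1 : \sum_i a i <= 1.

Lemma multi_ge0 n (z : vecN c) : 0 <= multi_pmf n a z.
Proof.
rewrite multiE; case: ifP => // _.
apply: mulr_ge0; last by apply: exprn_ge0; rewrite /bb subr_ge0.
apply: mulr_ge0; last by apply: prodr_ge0 => i _; apply: exprn_ge0.
apply: divr_ge0 => //; apply: mulr_ge0 => //; apply: prodr_ge0 => i _ //.
Qed.

End Multi.

Section EN.
Variables (R : realType) (c : nat) (a : 'I_c -> R) (N : nat).

Definition vz (u : {ffun 'I_c -> 'I_N}) : vecN c := [ffun k => val (u k)].
Definition EN n (g : vecN c -> R) : R :=
  \sum_(u : {ffun 'I_c -> 'I_N}) multi_pmf n a (vz u) * g (vz u).

Lemma vz_inj : injective vz.
Proof. by move=> u v /ffunP e; apply/ffunP => k; apply/val_inj; have := e k; rewrite !ffunE. Qed.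

Lemma szn_ge (z : vecN c) i : (z i <= szn z)%N.
Proof. by rewrite /szn (bigD1 i) //= leq_addr. Qed.

Lemma multi0 n (z : vecN c) i : (n < z i)%N -> multi_pmf n a z = 0.
Proof.
move=> h; rewrite multiE; case: ifP => // h'.
by have := leq_trans (leq_trans h (szn_ge z i)) h'; rewrite ltnn.
Qed.

Lemma incr_decr i (z : vecN c) : (0 < z i)%N -> incr i (decr i z) = z.
Proof.
move=> h; apply/ffunP => k; rewrite !ffunE; case: eqP => [->|_]; last by rewrite subn0 addn0.
by rewrite subn1 addn1 prednK.
Qed.

Definition sig (i : 'I_c) (u : {ffun 'I_c -> 'I_N}) : {ffun 'I_c -> 'I_N} :=
  [ffun k => if k == i then ordS (u k) else u k].

Lemma sig_inj i : injective (sig i).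
Proof.
move=> u v /ffunP e; apply/ffunP => k; have := e k; rewrite !ffunE.
by case: eqP => _ //; apply: ordS_inj.
Qed.

Lemma shift i (G : vecN c -> R) :
  (forall u : {ffun 'I_c -> 'I_N}, val (u i) = N.-1 -> G (vz u) = 0) ->
  \sum_(u : {ffun 'I_c -> 'I_N}) (if (0 < vz u i)%N then G (decr i (vz u)) else 0)
  = \sum_(u : {ffun 'I_c -> 'I_N}) G (vz u).
Proof.
move=> hG; rewrite (reindex_inj (@sig_inj i)) /=; apply: eq_bigr => v _.
have vi := ltn_ord (v i).
have [e|ne] := eqVneq (val (v i)) N.-1.
  rewrite hG // !ffunE eqxx /= e prednK ?modnn //; exact: (leq_ltn_trans (leq0n _) vi).
have lt : ((v i).+1 < N)%N.
  have hN : N = N.-1.+1 by rewrite prednK // (leq_ltn_trans (leq0n _) vi).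
  move/eqP: ne; move: hN vi; set m := N.-1; clearbody m => hN vi2 ne2; have ne3 : (v i : nat) <> m by []; lia.
rewrite !ffunE eqxx /= modn_small //; congr G; apply/ffunP => k; rewrite !ffunE.
case: eqP => [->|_] /=; first by rewrite modn_small // subn1.
by rewrite subn0.
Qed.

Lemma EN_rec n g : (n.+1 < N)%N ->
  EN n.+1 g = \sum_i a i * EN n (fun z => g (incr i z)) + bb a * EN n g.
Proof.
move=> hn; rewrite /EN.
under eq_bigr do rewrite multi_rec mulrDl big_distrl /=.
rewrite big_split /=; congr (_ + _); last first.
  by rewrite big_distrr /=; apply: eq_bigr => u _; rewrite mulrA.
rewrite exchange_big /=; apply: eq_bigr => i _; rewrite big_distrr /=.
transitivity (\sum_(u : {ffun 'I_c -> 'I_N})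
   (if (0 < vz u i)%N then a i * (multi_pmf n a (decr i (vz u)) * g (incr i (decr i (vz u)))) else 0)).
  apply: eq_bigr => u _; case: ifP => h; last by rewrite mulr0 mul0r.
  by rewrite incr_decr // mulrA.
have sh := @shift i (fun z => a i * (multi_pmf n a z * g (incr i z))).
rewrite /= in sh; rewrite sh //.
move=> u e; rewrite (@multi0 n _ i) ?mul0r ?mulr0 // ffunE /= e.
have hN : N = N.-1.+1 by rewrite prednK // (leq_ltn_trans (leq0n _) hn).
move: hN hn; set m := N.-1; clearbody m => hN hn2; lia.
Qed.

Lemma EN_ext n g h : (forall z, g z = h z) -> EN n g = EN n h.
Proof. by move=> e; apply: eq_bigr => u _; rewrite e. Qed.

Lemma EN_add n g h : EN n (fun z => g z + h z) = EN n g + EN n h.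
Proof. by rewrite /EN -big_split; apply: eq_bigr => u _; rewrite mulrDr. Qed.

Lemma EN_scal n k g : EN n (fun z => k * g z) = k * EN n g.
Proof. by rewrite /EN big_distrr; apply: eq_bigr => u _ /=; rewrite mulrCA. Qed.

Lemma EN_sum n (I : finType) (F : I -> vecN c -> R) :
  EN n (fun z => \sum_m F m z) = \sum_m EN n (F m).
Proof.
rewrite /EN exchange_big; apply: eq_bigr => u _ /=; by rewrite big_distrr.
Qed.

Lemma EN_0 g : (0 < N)%N -> EN 0 g = g [ffun => 0%N].
Proof.
move=> N0; rewrite /EN (bigD1 [ffun => Ordinal N0]) //= big1 ?addr0.
  have -> : vz [ffun=> Ordinal N0] = [ffun => 0%N] by apply/ffunP => k; rewrite !ffunE.
  rewrite multiE /szn /Dz /Pz.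
  rewrite (eq_bigr (fun _ => 0%N)) ?big1_eq //=; last by move=> k _; rewrite ffunE.
  rewrite big1 ?big1 ?mul1r ?expr0 ?mulr1 ?subnn ?fact0 ?invr1 ?mul1r //.
    by move=> k _; rewrite ffunE.
  by move=> k _; rewrite ffunE fact0.
move=> u hu; rewrite multiE; case: ifP => h; last by rewrite mul0r.
exfalso; move/negP: hu; apply; apply/eqP/vz_inj; apply/ffunP => k.
rewrite !ffunE; apply/eqP; move: h; rewrite leqn0 => /eqP h.
have := szn_ge (vz u) k; rewrite h ffunE leqn0 => /eqP ->.
by [].
Qed.

Lemma sum_delta (F : 'I_c -> R) i : \sum_l F l * ((i == l)%:R) = F i.
Proof.
rewrite (bigD1 i) //= eqxx mulr1 big1 ?addr0 // => l /negbTE h.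
by rewrite eq_sym h mulr0.
Qed.

Lemma EN_one n : (n < N)%N -> EN n (fun _ => 1) = 1.
Proof.
elim: n => [|n IH] hn; first by rewrite EN_0.
rewrite EN_rec // IH ?(ltn_trans _ hn) // -big_distrl /= /bb; ring.
Qed.

Lemma EN_const n k : (n < N)%N -> EN n (fun _ => k) = k.
Proof. by move=> hn; rewrite -[k]mulr1 (EN_scal n k (fun _ => 1)) EN_one. Qed.

Lemma EN_lin n i : (n < N)%N -> EN n (fun z => (z i)%:R) = n%:R * a i.
Proof.
elim: n => [|n IH] hn; first by rewrite EN_0 // ffunE mul0r.
have hn' : (n < N)%N by apply: ltn_trans hn.
rewrite EN_rec //.
under eq_bigr => l _.
  rewrite (@EN_ext n _ (fun z => (z i)%:R + (i == l)%:R)); last first.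
    by move=> z; rewrite ffunE natrD.
  rewrite EN_add IH // EN_const // mulrDr.
  over.
rewrite big_split /= sum_delta -big_distrl /= IH // /bb -[n.+1]addn1 natrD; ring.
Qed.

Lemma EN_quad n i k : (n < N)%N -> EN n (fun z => (z i)%:R * (z k)%:R) =
  n%:R * (n%:R - 1) * a i * a k + (i == k)%:R * n%:R * a i.
Proof.
elim: n => [|n IH] hn; first by rewrite EN_0 // !ffunE /=; ring.
have hn' : (n < N)%N by apply: ltn_trans hn.
rewrite EN_rec //.
under eq_bigr => l _.
  rewrite (@EN_ext n _ (fun z => (z i)%:R * (z k)%:R + ((k == l)%:R * (z i)%:R
     + ((i == l)%:R * (z k)%:R + (i == l)%:R * (k == l)%:R)))); last first.
    by move=> z; rewrite !ffunE !natrD; ring.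
  rewrite EN_add EN_add EN_add EN_scal EN_scal EN_const // !EN_lin // IH //.
  over.
rewrite /=.
have e1 : forall l, a l * (n%:R * (n%:R - 1) * a i * a k + (i == k)%:R * n%:R * a i +
   ((k == l)%:R * (n%:R * a i) + ((i == l)%:R * (n%:R * a k) + (i == l)%:R * (k == l)%:R)))
  = a l * (n%:R * (n%:R - 1) * a i * a k + (i == k)%:R * n%:R * a i)
    + (a l * (k == l)%:R) * (n%:R * a i) + (a l * (i == l)%:R) * (n%:R * a k)
    + (a l * (k == l)%:R) * (i == l)%:R.
  by move=> l; ring.
under eq_bigr do rewrite e1.
rewrite !big_split /= -!big_distrl /= !sum_delta.
rewrite IH // [k == i]eq_sym /bb -[n.+1]addn1 natrD; ring.
Qed.

Lemma EN_gen n (y : 'I_c -> R) : (n < N)%N ->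
  EN n (fun z => \prod_i y i ^+ z i) = (\sum_i a i * y i + bb a) ^+ n.
Proof.
elim: n => [|n IH] hn.
  by rewrite EN_0 // expr0; apply: big1 => i _; rewrite ffunE expr0.
have hn' : (n < N)%N by apply: ltn_trans hn.
rewrite EN_rec //.
under eq_bigr => l _.
  rewrite (@EN_ext n _ (fun z => y l * \prod_i y i ^+ z i)); last first.
    move=> z; rewrite (bigD1 l) //= [X in _ = _ * X](bigD1 l) //= ffunE eqxx addn1 exprS mulrA.
    congr (_ * _); apply: eq_bigr => m /negbTE h; by rewrite ffunE h addn0.
  rewrite EN_scal IH // mulrA.
  over.
by rewrite -big_distrl /= IH // -mulrDl exprS mulrC.
Qed.



End EN.

Lemma esum_finT (R : realType) (T : finType) (F : T -> R) :
  (forall t, 0 <= F t) ->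
  \esum_(t in [set: T]) (F t)%:E = (\sum_t F t)%:E.
Proof.
move=> F0; rewrite esum_fset //; last by move=> t _; rewrite lee_fin.
rewrite fsbig_finite //= -sumEFin.
rewrite -[RHS]big_enum /=; apply: perm_big; apply: uniq_perm.
- exact: finmap.fset_uniq.
- exact: enum_uniq.
- move=> t; rewrite mem_enum in_fset_set; last exact: finite_finset.
  by apply: (@etrans _ _ true); [exact: mem_set|].
- exact: finite_finset.
Qed.

Section Remark.
Variables (R : realType) (c d : nat) (p : vecN d -> R) (A : 'M[R]_(c, d)).
Hypothesis p0 : forall x, 0 <= p x.
Hypothesis A01 : forall i j, 0 <= A i j <= 1.
Hypothesis A1 : forall j, \sum_i A i j <= 1.

Definition col (j : 'I_d) : 'I_c -> R := fun i => A i j.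
Definition Nb (x : vecN d) : nat := (\max_j x j).+1.
Definition emb (x : vecN d) (z : {ffun 'I_d -> {ffun 'I_c -> 'I_(Nb x)}}) :
  {ffun 'I_d -> vecN c} := [ffun j => vz (z j)].
Definition Mprod (x : vecN d) (z2 : {ffun 'I_d -> vecN c}) : R :=
  \prod_j multi_pmf (x j) (col j) (z2 j).
Definition CE (h : Omega c d -> R) (x : vecN d) : R :=
  \sum_(z : {ffun 'I_d -> {ffun 'I_c -> 'I_(Nb x)}}) Mprod x (emb z) * h (x, emb z).

Lemma col0 j i : 0 <= col j i.
Proof. by have /andP[] := A01 i j. Qed.
Lemma col1 j : \sum_i col j i <= 1.
Proof. exact: A1. Qed.

Lemma Mprod_ge0 (x : vecN d) z2 : 0 <= Mprod (x : vecN d) z2.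
Proof. by apply: prodr_ge0 => j _; apply: multi_ge0; [exact: col0|exact: col1]. Qed.

Lemma q_ge0 w : 0 <= remark_pmf p A w.
Proof. by apply: mulr_ge0 => //; apply: Mprod_ge0. Qed.

Lemma xNb (x : vecN d) j : (x j < Nb x)%N.
Proof. by rewrite ltnS; apply: (leq_bigmax j). Qed.

Lemma CE_prod (phi : 'I_d -> vecN c -> R) (x : vecN d) :
  CE (fun w => \prod_j phi j (w.2 j)) x = \prod_j EN (col j) (Nb x) (x j) (phi j).
Proof.
rewrite /CE /EN bigA_distr_bigA /=; apply: eq_bigr => z _.
by rewrite /Mprod -big_split /=; apply: eq_bigr => j _; rewrite ffunE.
Qed.

Lemma CE_ext h g (x : vecN d) : (forall w, h w = g w) -> CE h (x : vecN d) = CE g x.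
Proof. by move=> e; apply: eq_bigr => z _; rewrite e. Qed.

Lemma CE_add h g (x : vecN d) : CE (fun w => h w + g w) (x : vecN d) = CE h (x : vecN d) + CE g x.
Proof. by rewrite /CE -big_split; apply: eq_bigr => z _; rewrite mulrDr. Qed.

Lemma CE_scal (k : vecN d -> R) h (x : vecN d) : CE (fun w => k w.1 * h w) (x : vecN d) = k (x : vecN d) * CE h x.
Proof. by rewrite /CE big_distrr; apply: eq_bigr => z _ /=; rewrite mulrCA. Qed.

Lemma CE_sum (I : finType) (F : I -> Omega c d -> R) (x : vecN d) :
  CE (fun w => \sum_m F m w) x = \sum_m CE (F m) x.
Proof. by rewrite /CE exchange_big; apply: eq_bigr => z _ /=; rewrite big_distrr. Qed.

Lemma CE_one (x : vecN d) : CE (fun _ => 1) x = 1.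
Proof.
have := CE_prod (fun _ _ => 1) x; rewrite /= => e.
rewrite (@CE_ext _ (fun w => \prod_(j < d) 1)); last by move=> w; rewrite big1.
rewrite e big1 // => j _; apply: EN_one; exact: xNb.
Qed.

Lemma CE_X (k : vecN d -> R) (x : vecN d) : CE (fun w => k w.1) (x : vecN d) = k x.
Proof.
rewrite (@CE_ext _ (fun w => k w.1 * 1)); last by move=> w; rewrite mulr1.
by rewrite CE_scal CE_one mulr1.
Qed.

Lemma CE_ge0 h (x : vecN d) : (forall w, 0 <= h w) -> 0 <= CE h x.
Proof. by move=> h0; apply: sumr_ge0 => z _; apply: mulr_ge0 => //; apply: Mprod_ge0. Qed.

Local Open Scope ereal_scope.

Lemma esum_inner (x : vecN d) (h : Omega c d -> R) : (forall w, (0 <= h w)%R) ->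
  \esum_(z2 in [set: {ffun 'I_d -> vecN c}]) ((p x * Mprod x z2) * h (x, z2))%:E
  = (p x * CE h x)%:E.
Proof.
move=> h0.
have ge0 : forall z2, (0 <= (p x * Mprod x z2) * h (x, z2))%R.
  by move=> z2; apply: mulr_ge0 => //; apply: mulr_ge0 => //; apply: Mprod_ge0.
rewrite (esumID (range (@emb x))); last by move=> z2 _; rewrite lee_fin.
rewrite [X in _ + X]esum1 ?adde0; last first.
  move=> z2 [_ /= nS]; case: (boolP [forall j, forall i, (z2 j i < Nb x)%N]) => hz.
    exfalso; apply: nS.
    exists [ffun j => [ffun i => Ordinal (elimT forallP (elimT forallP hz j) i)]] => //.
    by apply/ffunP => j; rewrite !ffunE; apply/ffunP => i; rewrite !ffunE.
  move: hz; rewrite negb_forall => /existsP[j]; rewrite negb_forall => /existsP[i].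
  rewrite -leqNgt => hji.
  rewrite /Mprod (bigD1 j) //= (@multi0 _ _ _ _ _ i) ?mul0r ?mulr0 ?mul0r //.
  exact: leq_trans (xNb x j) hji.
rewrite setTI esum_image; last by move=> z1 z2 _ _ /ffunP e; apply/ffunP => j;
  apply: vz_inj; have := e j; rewrite !ffunE.
rewrite esum_finT // /CE big_distrr /=; congr _%:E; apply: eq_bigr => z _.
by rewrite mulrA.
Qed.

Lemma esum_Omega (h : Omega c d -> R) : (forall w, (0 <= h w)%R) ->
  \esum_(w in [set: Omega c d]) (remark_pmf p A w * h w)%:E
  = ES (fun x => p x * CE h x)%R.
Proof.
move=> h0; rewrite /ES.
rewrite (eq_esum (b := fun x => \esum_(z2 in [set: {ffun 'I_d -> vecN c}])
   ((p x * Mprod x z2) * h (x, z2))%:E)); last by move=> x _; rewrite esum_inner.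
rewrite esum_esum; last first.
  by move=> x z2 _ _; rewrite lee_fin; apply: mulr_ge0 => //; apply: mulr_ge0 => //;
     apply: Mprod_ge0.
have -> : ([set: vecN d] `*`` (fun=> [set: {ffun 'I_d -> vecN c}]))%classic = (setT : set (Omega c d)).
  by apply/seteqP; split.
by apply: eq_esum => -[x z2] _.
Qed.

End Remark.

Lemma ES_lin (R : realType) (T : choiceType) (I : finType) (al : I -> R)
    (h : I -> T -> R) :
  (forall m, 0 <= al m) -> (forall m x, 0 <= h m x) -> (forall m, (ES (h m) < +oo)%E) ->
  ES (fun x => \sum_m al m * h m x) = (\sum_m al m * fine (ES (h m)))%:E.
Proof.
move=> al0 h0 hf; rewrite ES_sum; last by move=> m x; apply: mulr_ge0.
rewrite -sumEFin; apply: eq_bigr => m _.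
by rewrite ESZ // [ES (h m)]ES_fin // EFinM.
Qed.

Lemma max_split (R : realType) (y : R) : Num.max y 0 - Num.max (- y) 0 = y.
Proof.
case: (boolP (0 <= y)) => h.
  by rewrite (max_l h) (max_r _) ?subr0 // oppr_le0.
have h' : y <= 0 by rewrite ltW // ltNge.
by rewrite (max_r h') (max_l _) ?sub0r ?opprK // oppr_ge0.
Qed.

Lemma max_le_norm (R : realType) (y : R) : Num.max y 0 <= `|y|.
Proof. by rewrite ge_max normr_ge0 ler_norm. Qed.

Section Main.
Variables (R : realType) (c d : nat) (p : vecN d -> R) (A : 'M[R]_(c, d)).
Hypothesis p0 : forall x, 0 <= p x.
Hypothesis A01 : forall i j, 0 <= A i j <= 1.
Hypothesis A1 : forall j, \sum_i A i j <= 1.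

Local Notation q := (remark_pmf p A).
Local Notation CE := (CE A).

Definition PCE (h : Omega c d -> R) := fun x => p x * CE h x.

Lemma PCE_ge0 h x : (forall w, 0 <= h w) -> 0 <= PCE h x.
Proof. by move=> h0; apply: mulr_ge0 => //; apply: CE_ge0. Qed.

Lemma Ex_decomp f : Ex q f =
  fine (ES (PCE (fun w => Num.max (f w) 0))) - fine (ES (PCE (fun w => Num.max (- f w) 0))).
Proof.
rewrite /Ex /dsum /PCE -!esum_Omega //; last 2 first.
- by move=> w; rewrite le_max lexx orbT.
- by move=> w; rewrite le_max lexx orbT.
congr (fine _ - fine _); apply: eq_esum => w _; congr _%:E.
  by rewrite maxr_pMr ?mulr0 //; apply: q_ge0.
by rewrite maxr_pMr ?mulr0 ?mulrN //; apply: q_ge0.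
Qed.

Lemma summ_pos f : Ex_exists q f -> (ES (PCE (fun w => Num.max (f w) 0%R)) < +oo)%E.
Proof.
rewrite /Ex_exists /dsummable /summable /PCE => H.
rewrite -esum_Omega //; last by move=> w; rewrite le_max lexx orbT.
apply: le_lt_trans H; apply: le_esum => w _; rewrite abse_EFin lee_fin normrM.
by rewrite (ger0_norm (q_ge0 p0 A01 A1 w)); apply: ler_wpM2l; [apply: q_ge0|apply: max_le_norm].
Qed.

Lemma summ_neg f : Ex_exists q f -> (ES (PCE (fun w => Num.max (- f w)%R 0%R)) < +oo)%E.
Proof.
rewrite /Ex_exists /dsummable /summable /PCE => H.
rewrite -esum_Omega //; last by move=> w; rewrite le_max lexx orbT.
apply: le_lt_trans H; apply: le_esum => w _; rewrite abse_EFin lee_fin normrM.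
rewrite (ger0_norm (q_ge0 p0 A01 A1 w)); apply: ler_wpM2l; first by apply: q_ge0.
by rewrite -normrN; apply: max_le_norm.
Qed.

Lemma Ex_nn f : (forall w, 0 <= f w) -> Ex q f = fine (ES (PCE f)).
Proof.
move=> f0; rewrite Ex_decomp.
rewrite (@ES_eq _ _ (PCE (fun w => Num.max (f w) 0)) (PCE f)); last first.
  by move=> x; rewrite /PCE (@CE_ext _ _ _ _ _ f) // => w; rewrite (max_l (f0 w)).
rewrite (@ES_eq _ _ (PCE (fun w => Num.max (- f w) 0)) (fun _ => 0)); last first.
  move=> x; rewrite /PCE (@CE_ext _ _ _ _ _ (fun _ => 0 * 1)); last first.
    by move=> w; rewrite mul0r (max_r _) // oppr_le0.
  by rewrite (CE_scal A (fun _ => 0)) mul0r mulr0.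
have -> : ES (fun _ : vecN d => (0:R)) = 0%E by rewrite /ES esum1.
by rewrite subr0.
Qed.

Lemma summ_nn f : (forall w, 0 <= f w) -> Ex_exists q f -> (ES (PCE f) < +oo)%E.
Proof.
move=> f0 H; have := summ_pos H.
rewrite (@ES_eq _ _ (PCE (fun w => Num.max (f w) 0)) (PCE f)) //.
by move=> x; rewrite /PCE (@CE_ext _ _ _ _ _ f) // => w; rewrite (max_l (f0 w)).
Qed.

End Main.

Section Comp.
Variables (R : realType) (c d : nat) (A : 'M[R]_(c, d)).
Local Notation CE := (CE A).

Lemma prod_pick (F : 'I_d -> R) j : \prod_m (if m == j then F m else 1) = F j.
Proof. by rewrite (bigD1 j) //= eqxx big1 ?mulr1 // => m /negbTE ->. Qed.

Lemma CE_Zji j i (x : vecN d) : CE (fun w => (w.2 j i)%:R) x = (x j)%:R * A i j.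
Proof.
pose phi := fun (m : 'I_d) (u : vecN c) => if m == j then ((u i)%:R : R) else 1.
rewrite (@CE_ext _ _ _ _ _ (fun w => \prod_m phi m (w.2 m))); last first.
  by move=> w; rewrite /phi /= (prod_pick (fun m => (w.2 m i)%:R)).
rewrite CE_prod /phi.
rewrite (eq_bigr (fun m => if m == j then (x j)%:R * A i j else 1)).
  exact: (prod_pick (fun _ => (x j)%:R * A i j)).
move=> m _; case: eqP => [->|_]; first exact: EN_lin (xNb x j).
exact: EN_one (xNb x m).
Qed.

Lemma CE_Y i (x : vecN d) : CE (fun w => ((Yof w) i)%:R) x = \sum_j A i j * (x j)%:R.
Proof.
rewrite (@CE_ext _ _ _ _ _ (fun w => \sum_j (w.2 j i)%:R)); last first.
  by move=> w; rewrite ffunE natr_sum.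
by rewrite CE_sum; apply: eq_bigr => j _; rewrite CE_Zji mulrC.
Qed.

Lemma CE_ZZ j l i k (x : vecN d) : CE (fun w => (w.2 j i)%:R * (w.2 l k)%:R) x =
  (x j)%:R * (x l)%:R * A i j * A k l - (j == l)%:R * A i j * A k j * (x j)%:R
  + (j == l)%:R * (i == k)%:R * A i j * (x j)%:R.
Proof.
pose phi := fun (m : 'I_d) (u : vecN c) =>
  (if m == j then ((u i)%:R : R) else 1) * (if m == l then ((u k)%:R : R) else 1).
rewrite (@CE_ext _ _ _ _ _ (fun w => \prod_m phi m (w.2 m))); last first.
  move=> w; rewrite /phi /= big_split /=.
  by rewrite (prod_pick (fun m => (w.2 m i)%:R)) (prod_pick (fun m => (w.2 m k)%:R)).
rewrite CE_prod /phi.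
have [e|ne] := eqVneq j l.
  rewrite -e ?eqxx /=.
  rewrite (eq_bigr (fun m => if m == j then
     (x j)%:R * ((x j)%:R - 1) * A i j * A k j + (i == k)%:R * (x j)%:R * A i j else 1)).
    rewrite (prod_pick (fun _ => (x j)%:R * ((x j)%:R - 1) * A i j * A k j
       + (i == k)%:R * (x j)%:R * A i j)) /=; ring.
  move=> m _; case: eqP => [->|_]; first exact: EN_quad (xNb x j).
  by rewrite mulr1; exact: EN_one (xNb x m).
rewrite /= !mul0r subr0 addr0.
rewrite (eq_bigr (fun m => (if m == j then (x j)%:R * A i j else 1) *
    (if m == l then (x l)%:R * A k l else 1))).
  rewrite big_split /= (prod_pick (fun _ => (x j)%:R * A i j))
    (prod_pick (fun _ => (x l)%:R * A k l)); ring.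
move=> m _; case: eqP => [->|mj]; case: eqP => [ml|ml].
- by rewrite ml eqxx in ne.
- rewrite mulr1 (@EN_ext _ _ _ _ _ _ (fun u => (u i)%:R)); last by move=> u; rewrite mulr1.
  by rewrite EN_lin ?(xNb x j) // mulr1.
- rewrite ml mul1r (@EN_ext _ _ _ _ _ _ (fun u => (u k)%:R)); last by move=> u; rewrite mul1r.
  by rewrite EN_lin ?(xNb x l) // mul1r.
- rewrite ?mulr1; exact: EN_one (xNb x m).
Qed.

Definition YY i k (x : vecN d) : R := \sum_j \sum_l
  ((x j)%:R * (x l)%:R * A i j * A k l - (j == l)%:R * A i j * A k j * (x j)%:R
  + (j == l)%:R * (i == k)%:R * A i j * (x j)%:R).

Lemma CE_YY i k (x : vecN d) :
  CE (fun w => ((Yof w) i)%:R * ((Yof w) k)%:R) x = YY i k x.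
Proof.
rewrite (@CE_ext _ _ _ _ _ (fun w => \sum_j \sum_l (w.2 j i)%:R * (w.2 l k)%:R)); last first.
  move=> w; rewrite !ffunE !natr_sum mulr_suml; apply: eq_bigr => j _.
  by rewrite mulr_sumr.
rewrite CE_sum; apply: eq_bigr => j _; rewrite CE_sum; apply: eq_bigr => l _.
exact: CE_ZZ.
Qed.

Lemma CE_G (t : 'cV[R]_c) (x : vecN d) :
  CE (fmgf_integrand (@Yof c d) t) x = \prod_j (1 + \sum_i A i j * t i 0) ^+ (x j).
Proof.
pose phi := fun (m : 'I_d) (u : vecN c) => \prod_i (1 + t i 0) ^+ (u i).
rewrite (@CE_ext _ _ _ _ _ (fun w => \prod_m phi m (w.2 m))); last first.
  move=> w; rewrite /fmgf_integrand /phi /= exchange_big /=; apply: eq_bigr => i _.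
  by rewrite ffunE expr_sum.
rewrite CE_prod /phi; apply: eq_bigr => j _.
rewrite EN_gen ?(xNb x j) //; congr (_ ^+ _).
rewrite /bb /col.
under eq_bigr do rewrite mulrDr mulr1.
rewrite big_split /=; ring.
Qed.

End Comp.

Lemma dispE (R : realType) (T : choiceType) (q : T -> R) (n : nat) (U : T -> vecN n) i k :
  dispmx q U i k = Ex q (fun w => (U w i)%:R * (U w k)%:R)
    - Ex q (fun w => (U w i)%:R) * Ex q (fun w => (U w k)%:R)
    - (i == k)%:R * Ex q (fun w => (U w i)%:R).
Proof.
rewrite mxE /cov; case: eqP => [<-|_] /=; first by rewrite mul1r.
by rewrite mul0r subr0.
Qed.

Lemma efin_solve (R : realType) (e : \bar R) (g h : R) :
  (0 <= e)%E -> (e + g%:E = h%:E)%E -> fine e = h - g.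
Proof.
move=> _ H; case: e H => [r||] H //.
- have E : r + g = h by apply: EFin_inj; rewrite EFinD.
  by rewrite -E /= addrK.
Qed.

Lemma sum_pick (R : realType) (d : nat) (F : 'I_d -> R) j :
  \sum_l (j == l)%:R * F l = F j.
Proof.
rewrite (bigD1 j) //= eqxx mul1r big1 ?addr0 // => l /negbTE h.
by rewrite eq_sym h mul0r.
Qed.

Lemma YY_simpl (R : realType) (c d : nat) (A : 'M[R]_(c, d)) i k (x : vecN d) :
  YY A i k x = \sum_j \sum_l (x j)%:R * (x l)%:R * A i j * A k l
    - \sum_j A i j * A k j * (x j)%:R + (i == k)%:R * \sum_j A i j * (x j)%:R.
Proof.
rewrite /YY mulr_sumr -sumrB -big_split /=; apply: eq_bigr => j _.
rewrite big_split sumrB /=; congr (_ - _ + _).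
  rewrite -(sum_pick (fun l => A i j * A k j * (x j)%:R) j).
  by apply: eq_bigr => l _; rewrite !mulrA.
rewrite -(sum_pick (fun l => (i == k)%:R * (A i j * (x j)%:R)) j) /=.
by apply: eq_bigr => l _; rewrite !mulrA.
Qed.

Lemma efin4 (R : realType) (e1 e2 e3 e4 : \bar R) :
  e1 \is a fin_num -> e2 \is a fin_num -> e3 \is a fin_num -> e4 \is a fin_num ->
  (e1 + e2 = e3 + e4)%E -> fine e1 - fine e3 = fine e4 - fine e2.
Proof.
move=> f1 f2 f3 f4; rewrite -(fineK f1) -(fineK f2) -(fineK f3) -(fineK f4) -!EFinD.
move=> H; have H2 := EFin_inj H; lra.
Qed.

Lemma max_split2 (R : realType) (y : R) : Num.max y 0 = y + Num.max (- y) 0.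
Proof. have := max_split y; lra. Qed.

Unset Implicit Arguments.
Set Strict Implicit.

Theorem theorem3 (R : realType) (c d : nat) (p : vecN d -> R)
  (A : 'M[R]_(c, d)) :
  is_pmf p ->
  (forall i j, 0 <= A i j <= 1) ->
  (forall j, \sum_i A i j <= 1) ->
  let q := remark_pmf p A in
  ((forall j, Ex_exists q (fun w => ((@Xof c d w) j)%:R)) ->
     meanvec q (@Yof c d) = A *m meanvec q (@Xof c d)) /\
  ((forall j, Ex_exists q (fun w => ((@Xof c d w) j)%:R)) ->
   (forall j k, Ex_exists q (fun w => ((@Xof c d w) j)%:R * ((@Xof c d w) k)%:R)) ->
     dispmx q (@Yof c d) = A *m dispmx q (@Xof c d) *m A^T) /\
  (forall t : 'cV[R]_c,
     Ex_exists q (fmgf_integrand (@Yof c d) t) ->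
     Ex_exists q (fmgf_integrand (@Xof c d) (A^T *m t)) ->
     fmgf q (@Yof c d) t = fmgf q (@Xof c d) (A^T *m t)).
Proof.
move=> [p0 _] A01 A1 q.
have A0 : forall i j, 0 <= A i j by move=> i j; have /andP[] := A01 i j.
pose mX j := fine (ES (fun x => p x * (x j)%:R)).
pose mXX j l := fine (ES (fun x => p x * ((x j)%:R * (x l)%:R))).
have EX : forall j, Ex q (fun w => ((Xof w) j)%:R) = mX j.
  move=> j; rewrite (Ex_nn p0 A01 A1) //; congr fine; apply: ES_eq => x.
  by rewrite /PCE (CE_X A (fun x => (x j)%:R)).
have EXX : forall j l, Ex q (fun w => ((Xof w) j)%:R * ((Xof w) l)%:R) = mXX j l.
  move=> j l; rewrite (Ex_nn p0 A01 A1) //.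
  congr fine; apply: ES_eq => x.
  by rewrite /PCE (CE_X A (fun x => (x j)%:R * (x l)%:R)).
have finX : (forall j, Ex_exists q (fun w => ((Xof w) j)%:R)) ->
    forall j, (ES (fun x => (p x * (x j)%:R)%R) < +oo)%E.
  move=> HX j; have := @summ_nn _ _ _ p A p0 A01 A1 _ (fun w => ler0n _ _) (HX j).
  suff -> : ES (PCE p A (fun w => ((Xof w) j)%:R)) = ES (fun x => p x * (x j)%:R) by [].
  by apply: ES_eq => x; rewrite /PCE (CE_X A (fun x => (x j)%:R)).
have finXX : (forall j l, Ex_exists q (fun w => ((Xof w) j)%:R * ((Xof w) l)%:R)) ->
    forall j l, (ES (fun x => (p x * ((x j)%:R * (x l)%:R))%R) < +oo)%E.
  move=> HX j l.
  have := @summ_nn _ _ _ p A p0 A01 A1 _ (fun w => mulr_ge0 (ler0n _ _) (ler0n _ _)) (HX j l).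
  suff -> : ES (PCE p A (fun w => ((Xof w) j)%:R * ((Xof w) l)%:R))
    = ES (fun x => p x * ((x j)%:R * (x l)%:R)) by [].
  by apply: ES_eq => x; rewrite /PCE (CE_X A (fun x => (x j)%:R * (x l)%:R)).
have EY : (forall j, Ex_exists q (fun w => ((Xof w) j)%:R)) ->
    forall i, Ex q (fun w => ((Yof w) i)%:R) = \sum_j A i j * mX j.
  move=> HX i; rewrite (Ex_nn p0 A01 A1) //.
  rewrite (@ES_eq _ _ _ (fun x => \sum_j A i j * (p x * (x j)%:R))); last first.
    by move=> x; rewrite /PCE CE_Y mulr_sumr; apply: eq_bigr => j _; rewrite mulrCA.
  rewrite ES_lin //; try (by move=> *; apply: mulr_ge0); try (by move=> m; apply: A0).
  exact: finX.
split.
  move=> HX; apply/matrixP => i k; rewrite !mxE EY //.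
  by apply: eq_bigr => j _; rewrite !mxE EX.
split.
  move=> HX HXX; apply/matrixP => i k.
  pose S1 := \sum_j \sum_l A i j * A k l * mXX j l.
  pose S3 := \sum_j A i j * A k j * mX j.
  pose S4 := \sum_j A i j * mX j.
  have EYY : Ex q (fun w => ((Yof w) i)%:R * ((Yof w) k)%:R) = S1 + (i == k)%:R * S4 - S3.
    rewrite (Ex_nn p0 A01 A1) //.
    rewrite (@ES_eq _ _ _ (fun x => p x * YY A i k x)); last first.
      by move=> x; rewrite /PCE CE_YY.
    apply: efin_solve.
      apply: ES_ge0 => x; apply: mulr_ge0 => //; rewrite -CE_YY; apply: (CE_ge0 A01 A1) => w.
      by apply: mulr_ge0; apply: ler0n.
    have E3 : S3%:E = ES (fun x => \sum_j (A i j * A k j) * (p x * (x j)%:R)).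
      rewrite ES_lin //; try (by move=> *; apply: mulr_ge0); last exact: finX.
    have E1 : S1%:E = ES (fun x => \sum_(jl : 'I_d * 'I_d) (A i jl.1 * A k jl.2) *
                 (p x * ((x jl.1)%:R * (x jl.2)%:R))).
      rewrite ES_lin //; try (by move=> *; apply: mulr_ge0); last first.
        by move=> jl; apply: finXX.
      by rewrite /S1 pair_big /=.
    have E4 : ((i == k)%:R * S4)%:E = ES (fun x => \sum_j ((i == k)%:R * A i j) * (p x * (x j)%:R)).
      rewrite ES_lin //; try (by move=> *; apply: mulr_ge0); last exact: finX.
      by rewrite /S4 mulr_sumr; congr _%:E; apply: eq_bigr => j _; rewrite mulrA.
    rewrite E3 EFinD E1 E4 -!ESD; first last; try (by move=> x; apply: sumr_ge0 => m _;
        repeat apply: mulr_ge0; by [apply: A0|apply: p0|apply: ler0n]).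
      move=> x; apply: mulr_ge0 => //; rewrite -CE_YY; apply: (CE_ge0 A01 A1) => w.
      by apply: mulr_ge0; apply: ler0n.
    apply: ES_eq => x; rewrite YY_simpl.
    rewrite -(pair_bigA _ (fun j l => A i j * A k l * (p x * ((x j)%:R * (x l)%:R)))) /=.
    rewrite !mulr_sumr.
    have e1 : forall j, \sum_l A i j * A k l * (p x * ((x j)%:R * (x l)%:R))
       = p x * \sum_l (x j)%:R * (x l)%:R * A i j * A k l.
      by move=> j; rewrite mulr_sumr; apply: eq_bigr => l _; ring.
    under [X in _ = X + _]eq_bigr do rewrite e1.
    rewrite -!mulr_sumr.
    have e3 : \sum_j A i j * A k j * (p x * (x j)%:R) = p x * \sum_j A i j * A k j * (x j)%:R.
      by rewrite mulr_sumr; apply: eq_bigr => j _; ring.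
    have e4 : \sum_j (i == k)%:R * A i j * (p x * (x j)%:R) = p x * ((i == k)%:R * \sum_j A i j * (x j)%:R).
      by rewrite !mulr_sumr; apply: eq_bigr => j _; ring.
    rewrite e3 e4; ring.
  rewrite dispE EYY !EY //.
  rewrite !mxE.
  have Dxe : forall j l, dispmx q (@Xof c d) j l = mXX j l - mX j * mX l - (j == l)%:R * mX j.
    by move=> j l; rewrite dispE !EX EXX.
  pose T := \sum_j A k j * mX j.
  have R1 : \sum_l (A *m dispmx q (@Xof c d)) i l * A^T l k = S1 - S4 * T - S3.
    transitivity (\sum_j (\sum_l A i j * A k l * mXX j l - A i j * mX j * T
                   - A i j * A k j * mX j)).
      under eq_bigr => l _ do rewrite !mxE big_distrl /=.
      rewrite exchange_big /=; apply: eq_bigr => j _.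
      rewrite /T mulr_sumr -(sum_pick (fun l => A i j * A k l * mX j) j) /=.
      rewrite -!sumrB; apply: eq_bigr => l _; rewrite Dxe; ring.
    by rewrite !sumrB /S1 /S3 /S4 mulr_suml.
  rewrite R1 -/S4 -/T; ring.
move=> t HY HX.
rewrite /fmgf !(Ex_decomp p0 A01 A1).
pose g := fun x : vecN d => \prod_j (1 + \sum_i A i j * t i 0) ^+ (x j).
have fXe : forall w, fmgf_integrand (@Xof c d) (A^T *m t) w = g w.1.
  move=> w; rewrite /fmgf_integrand /g; apply: eq_bigr => j _; rewrite mxE.
  congr ((1 + _) ^+ _); apply: eq_bigr => i _; rewrite mxE //.
have Pp : forall x, PCE p A (fun w => Num.max (fmgf_integrand (@Xof c d) (A^T *m t) w) 0) x
    = p x * Num.max (g x) 0.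
  move=> x; rewrite /PCE (@CE_ext _ _ _ _ _ (fun w => (fun x => Num.max (g x) 0) w.1)).
    by rewrite (CE_X A (fun x => Num.max (g x) 0)).
  by move=> w; rewrite fXe.
have Pn : forall x, PCE p A (fun w => Num.max (- fmgf_integrand (@Xof c d) (A^T *m t) w) 0) x
    = p x * Num.max (- g x) 0.
  move=> x; rewrite /PCE (@CE_ext _ _ _ _ _ (fun w => (fun x => Num.max (- g x) 0) w.1)).
    by rewrite (CE_X A (fun x => Num.max (- g x) 0)).
  by move=> w; rewrite fXe.
have fa1 := summ_pos p0 A01 A1 HY.
have fa2 := summ_neg p0 A01 A1 HY.
have fb1 := summ_pos p0 A01 A1 HX.
have fb2 := summ_neg p0 A01 A1 HX.
rewrite (ES_eq Pp) in fb1 *; rewrite (ES_eq Pn) in fb2 *.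
apply: efin4.
- by rewrite ge0_fin_numE // ES_ge0 // => x; apply: PCE_ge0 => // w; rewrite le_max lexx orbT.
- by rewrite ge0_fin_numE // ES_ge0 // => x; apply: mulr_ge0 => //; rewrite le_max lexx orbT.
- by rewrite ge0_fin_numE // ES_ge0 // => x; apply: PCE_ge0 => // w; rewrite le_max lexx orbT.
- by rewrite ge0_fin_numE // ES_ge0 // => x; apply: mulr_ge0 => //; rewrite le_max lexx orbT.
rewrite -!ESD; first last.
- by move=> x; apply: mulr_ge0 => //; rewrite le_max lexx orbT.
- by move=> x; apply: PCE_ge0 => // w; rewrite le_max lexx orbT.
- by move=> x; apply: mulr_ge0 => //; rewrite le_max lexx orbT.
- by move=> x; apply: PCE_ge0 => // w; rewrite le_max lexx orbT.
apply: ES_eq => x; rewrite /PCE.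
rewrite (@CE_ext _ _ _ _ _ (fun w => fmgf_integrand (@Yof c d) t w
    + Num.max (- fmgf_integrand (@Yof c d) t w) 0)); last by move=> w; rewrite max_split2.
rewrite CE_add CE_G (max_split2 (g x)) -/(g x); ring.
Qed.
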